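(* Let $D,d_1,d_2\in\mathbb{Z}$ and let $T=(T_{r,k})_{r,k\ge 0}$ be a number triangle with $T_{r,0}=T_{0,0}+rd_2$ and $T_{0,k}=T_{0,0}+kd_1$ for all $r,k\ge 0$, with $T_{r,k}\neq 0$ for all $r,k\ge 0$, and with $$T_{r,k}=\frac{T_{r,k-1}\cdot T_{r-1,k}+D}{T_{r-1,k-1}}\quad\text{for all } r,k\ge 1.$$ Then there exist $c,d\in\mathbb{Z}$ such that $T=T(c,d,d_1,d_2)$ (i.e. $T_{r,k}=c+kd_1+rd_2+rkd$ for all $r,k\ge 0$) and $D=cd-d_1d_2$.
   Context: A number triangle is an array of integers $T_{r,k}$ indexed by integers $r,k\ge 0$ ($T_{r,k}$ being the $k$-th entry on the $r$-th major diagonal, row $n$ consisting of the entries with $r+k=n$). For $c,d,d_1,d_2\in\mathbb{Z}$, the Generalized Rascal Triangle $T(c,d,d_1,d_2)$ is the number triangle with $T_{r,k}=c+kd_1+rd_2+rkd$. *)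

(* Defs.v *)
From Stdlib Require Import ZArith.
Open Scope Z_scope.

Definition rascal (c d d1 d2 : Z) (r k : nat) : Z :=
  c + Z.of_nat k * d1 + Z.of_nat r * d2 + Z.of_nat r * Z.of_nat k * d.

(* Main.v *)
Require Import Defs.
From Stdlib Require Import ZArith Lia.
Open Scope Z_scope.

Lemma rascal_rec c d d1 d2 r k :
  rascal c d d1 d2 (S r) (S k) * rascal c d d1 d2 r k =
  rascal c d d1 d2 (S r) k * rascal c d d1 d2 r (S k) + (c * d - d1 * d2).
Proof. unfold rascal. rewrite !Nat2Z.inj_succ. ring. Qed.

Theorem mainTheorem4 (D d1 d2 : Z) (T : nat -> nat -> Z)
  (hcol : forall r : nat, T r O = T O O + Z.of_nat r * d2)
  (hrow : forall k : nat, T O k = T O O + Z.of_nat k * d1)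
  (hnz : forall r k : nat, T r k <> 0)
  (hrec : forall r k : nat,
     T (S r) (S k) * T r k = T (S r) k * T r (S k) + D) :
  exists c d : Z,
    (forall r k : nat, T r k = rascal c d d1 d2 r k) /\ D = c * d - d1 * d2.
Proof.
  pose (c := T O O).
  pose (d := T 1%nat 1%nat - c - d1 - d2).
  assert (HD : D = c * d - d1 * d2).
  { pose proof (hrec O O) as H. rewrite (hcol 1%nat), (hrow 1%nat) in H.
    unfold d; fold c in H; change (Z.of_nat 1) with 1 in H; rewrite !Z.mul_1_l in H; clearbody c; lia. }
  exists c, d. split; [|exact HD].
  induction r as [|r IHr]; intro k.
  - rewrite hrow. unfold rascal; change (Z.of_nat 0) with 0; fold c; ring.
  - induction k as [|k IHk].
    + rewrite hcol. unfold rascal; change (Z.of_nat 0) with 0; fold c; ring.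
    + pose proof (hrec r k) as H. pose proof (rascal_rec c d d1 d2 r k) as H2.
      rewrite <- HD in H2. rewrite IHk, !IHr in H.
      pose proof (hnz r k) as Hn. rewrite IHr in Hn.
      apply (Z.mul_cancel_r _ _ _ Hn). lia.
Qed.
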